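(* Let $\mathbb{A}$ be an epistemic Heyting algebra and $a\in\mathbb{A}$. If $[b]\in\mathsf{Min}_i(\mathbb{A}^a)$, then $\lozenge_i(b\wedge a)$ is the unique $i$-minimal element of $\mathbb{A}$ which belongs to $[b]$.
   Context: Fix a set $\mathsf{Ag}$ of agents. A monadic Heyting algebra is a Heyting algebra $\mathbb{L}$ with, for each $i\in\mathsf{Ag}$, monotone unary operations $\lozenge_i,\Box_i$ such that for all $a,b$: $a\leq\lozenge_i a$; $\Box_i a\leq a$; $\lozenge_i(a\vee b)\leq\lozenge_i a\vee\lozenge_i b$; $\Box_i(a\to b)\leq\Box_i a\to\Box_i b$; $\lozenge_i a\leq\Box_i\lozenge_i a$; $\lozenge_i\Box_i a\leq\Box_i a$; $\Box_i(a\to b)\leq\lozenge_i a\to\lozenge_i b$; $\lozenge_i\bot\leq\bot$; $\top\leq\Box_i\top$. An epistemic Heyting algebra is a finite monadic Heyting algebra with $\lozenge_i a\vee\neg\lozenge_i a=\top$ for all $i,a$. An element $c$ is $i$-minimal if $c\neq\bot$, $\lozenge_i c=c$, and whenever $d<c$ and $\lozenge_i d=d$ then $d=\bot$; $\mathsf{Min}_i(\cdot)$ is the set of $i$-minimal elements. The pseudo-quotient algebra $\mathbb{A}^a$: $b\cong_a c$ iff $b\wedge a=c\wedge a$; carrier the quotient Heyting algebra $\mathbb{L}/{\cong_a}$ with classes $[c]$ ($[b]\leq[c]$ iff $b\wedge a\leq c\wedge a$); $\lozenge^a_i[b]=[\lozenge_i(b\wedge a)]$, $\Box^a_i[b]=[\Box_i(a\to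 b)]$; $i$-minimality in $\mathbb{A}^a$ is w.r.t. $\lozenge^a_i$. *)

(* Defs.v *)
From HB Require Import structures.
From mathcomp Require Import all_boot all_order.
Set Implicit Arguments. Unset Strict Implicit. Unset Printing Implicit Defensive.
Import Order.TTheory.
Local Open Scope order_scope.

Section EHA.
Variables (disp : Order.disp_t) (L : finTBLatticeType disp).
Variable (imp : L -> L -> L).
Variable (Ag : Type).
Variables (dia box : Ag -> L -> L).

Definition heyting_imp : Prop :=
  forall a b c : L, (c <= imp a b) = (c `&` a <= b).

Definition hneg (x : L) : L := imp x \bot.

Definition monadic_heyting : Prop :=
  heyting_imp /\
  forall i : Ag,
  (forall a b : L, a <= b -> dia i a <= dia i b) /\
  (forall a b : L, a <= b -> box i a <= box i b) /\
  (forall a : L, a <= dia i a) /\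
  (forall a : L, box i a <= a) /\
  (forall a b : L, dia i (a `|` b) <= dia i a `|` dia i b) /\
  (forall a b : L, box i (imp a b) <= imp (box i a) (box i b)) /\
  (forall a : L, dia i a <= box i (dia i a)) /\
  (forall a : L, dia i (box i a) <= box i a) /\
  (forall a b : L, box i (imp a b) <= imp (dia i a) (dia i b)) /\
  (dia i \bot <= \bot) /\
  (\top <= box i \top).

(* Finiteness is built into L : finTBLatticeType. *)
Definition epistemic_heyting : Prop :=
  monadic_heyting /\
  forall (i : Ag) (a : L), dia i a `|` hneg (dia i a) = \top.

Definition i_minimal (i : Ag) (c : L) : Prop :=
  [/\ c <> \bot, dia i c = c &
      forall d : L, d < c -> dia i d = d -> d = \bot].

(* Pseudo-quotient A^a, presented on representatives:
   [b] = [c]  iff  b `&` a = c `&` a;  [b] <= [c] iff b `&` a <= c `&` a;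
   dia^a_i [b] = [dia i (b `&` a)];  box^a_i [b] = [box i (imp a b)];
   bottom of the quotient is [\bot]. *)
Definition cong (a b c : L) : Prop := b `&` a = c `&` a.
Definition qle (a b c : L) : Prop := b `&` a <= c `&` a.
Definition qlt (a b c : L) : Prop := qle a b c /\ ~ cong a b c.
Definition qdia (a : L) (i : Ag) (b : L) : L := dia i (b `&` a).
Definition qbox (a : L) (i : Ag) (b : L) : L := box i (imp a b).

Definition q_i_minimal (a : L) (i : Ag) (c : L) : Prop :=
  [/\ ~ cong a c \bot, cong a (qdia a i c) c &
      forall d : L, qlt a d c -> cong a (qdia a i d) d -> cong a d \bot].

End EHA.

(* Main.v *)
Require Import Defs.
From mathcomp Require Import all_boot all_order.
Import Order.TTheory.
Local Open Scope order_scope.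

Theorem lemma5 (disp : Order.disp_t) (L : finTBLatticeType disp)
  (imp : L -> L -> L) (Ag : Type) (dia box : Ag -> L -> L)
  (HA : epistemic_heyting imp dia box) (a b : L) (i : Ag) :
  q_i_minimal dia a i b ->
  [/\ i_minimal dia i (dia i (b `&` a)),
      cong a (dia i (b `&` a)) b &
      forall c : L, i_minimal dia i c -> cong a c b -> c = dia i (b `&` a)].
Proof.
case: HA => [[Himp Hi] _].
have [Dmono [Bmono [Dext [Bdef [_ [_ [DB [DBx [BK [D0 _]]]]]]]]]] := Hi i.
have Didem : forall y, dia i (dia i y) = dia i y.
  move=> y; apply/le_anti; rewrite Dext andbT.
  apply: (le_trans (Dmono _ _ (DB y))); apply: le_trans (DBx _) (Bdef _).
have K : forall d x, dia i d = d -> x `&` d = \bot -> dia i x `&` d = \bot.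
  move=> d x Hd Hxd; apply/eqP; rewrite -lex0.
  have h1 : d <= box i d by rewrite -{1}Hd; apply: le_trans (DB _) _; rewrite Hd.
  have h2 : d <= imp x \bot by rewrite Himp meetC Hxd.
  have h3 := le_trans h1 (le_trans (Bmono _ _ h2) (BK x \bot)).
  rewrite Himp in h3; rewrite meetC; apply: le_trans h3 D0.
case=> [Hb Hcong Hmin].
rewrite /cong meet0x in Hb.
set c := dia i (b `&` a).
have Hcc : dia i c = c by rewrite /c Didem.
have Hc0 : c <> \bot.
  move=> E; apply: Hb; apply/eqP; rewrite -lex0 -E; exact: Dext.
have Hcmin : i_minimal dia i c.
  split=> // d Hdc Hd.
  have Hda : dia i (d `&` a) `&` a = d `&` a.
    apply/le_anti/andP; split.
      rewrite lexI leIr andbT; apply: le_trans (leIl _ _) _.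
      rewrite -{2}Hd; apply: Dmono; exact: leIl.
    by rewrite lexI leIr andbT Dext.
  have Hle : d `&` a <= b `&` a.
    rewrite -Hcong /qdia -/c; apply: leI2 => //; exact: ltW.
  have [Heq|Hneq] := eqVneq (d `&` a) (b `&` a).
    exfalso; have := Hdc; rewrite lt_neqAle => /andP [/negP H _]; apply: H.
    rewrite eq_le (ltW Hdc) /=; rewrite /c -Heq -{2}Hd; apply: Dmono; exact: leIl.
  have H0 : d `&` a = \bot.
    have := Hmin d; rewrite /qlt /cong /qle /qdia meet0x; apply=> //.
    by split=> // E; rewrite E eqxx in Hneq.
  have H1 : (b `&` a) `&` d = \bot.
    apply/eqP; rewrite -lex0 -H0 lexI leIr /=.
    exact: le_trans (leIl _ _) (leIr _ _).
  have H2 := K d _ Hd H1; rewrite -/c in H2.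
  by rewrite -H2; apply/esym/meet_idPr; exact: ltW.
split=> // c' [Hc'0 Hc'c Hc'min] Hc'.
have Hle : c <= c'.
  rewrite /c /cong in Hc' *; rewrite -Hc' -{2}Hc'c; apply: Dmono; exact: leIl.
have [E|Hlt] := eqVneq c c'; first by [].
exfalso; apply: Hc0; apply: Hc'min => //; rewrite lt_neqAle Hle andbT.
exact: Hlt.
Qed.
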